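(* Let $A=(a_1\ a_2\ a_3\ a_4)$ be a matrix of positive integers that admits a gluing of the first kind in the order $(a_1,a_2,a_3,a_4)$ (type $(((a_1\circ a_2)\circ a_3)\circ a_4)$). Let $M$ be a minimal Markov basis of $A$ consisting of $b=(b_1,-b_2,0,0)$, $c=(c_1,c_2,-c_3,0)$, $d=(d_1,d_2,d_3,-d_4)$, where $b_1,b_2,c_3,d_4>0$ and $c_1,c_2,d_1,d_2,d_3\ge0$ are integers, and assume $b_1>b_2$. Then $M$ is distance reducing if and only if all of the following hold: (a) $c_1<c_2+c_3$; (b) ($c_1=0$ and $c_3<c_2$) or $d_1+d_3<d_2+d_4$; (c) $c_1+c_2<c_3$ or $d_1+d_2<d_3+d_4$.
   Context: $A$ admits a gluing of the first kind in the order $(a_1,\dots,a_4)$ if for each $k\in\{1,2,3\}$ there exists $x\in\mathbb N\{a_1,\dots,a_k\}\cap a_{k+1}\mathbb N$ with $x\mathbb Z=\mathbb Z\{a_1,\dots,a_k\}\cap a_{k+1}\mathbb Z$. For $z\in\mathbb Z^n$, $z^\pm\in\mathbb N^n$ are the unique vectors with disjoint supports and $z=z^+-z^-$; $\|\cdot\|$ is the $1$-norm. A Markov basis is a set $B\subseteq\ker(A)$ whose binomials $x^{u^+}-x^{u^-}$ generate the toric ideal $I_A$; minimal means no proper subset is one. For nonzero $z\in\ker(A)$, $u$ reduces the distance of $z$ if there exist $(p,q)\in\{(z^+,z^-),(z^-,z^+)\}$ and $\varepsilon\in\{\pm1\}$ with $p+\varepsilon u\in\mathbb N^n$ and $\|p+\varepsilon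 u-q\|<\|z\|$; $B$ is distance reducing if every nonzero $z\in\ker(A)$ has its distance reduced by some element of $B$. *)

(* Defs.v *)
From HB Require Import structures.
From mathcomp Require Import all_boot all_order all_algebra.
From mathcomp Require Import mpoly.
Set Implicit Arguments. Unset Strict Implicit. Unset Printing Implicit Defensive.
Import Order.TTheory GRing.Theory Num.Theory.
Local Open Scope ring_scope.

(* Vectors in Z^n are finite functions 'I_n -> int.  The matrix A = (a_1 .. a_n)
   is a function a : 'I_n -> int (0-indexed: a_i of the paper is a (i-1)). *)
Notation zvec n := {ffun 'I_n -> int}.

Definition inker n (a : 'I_n -> int) (z : zvec n) : Prop :=
  \sum_(i < n) a i * z i = 0.

Definition zpos n (z : zvec n) : zvec n := [ffun i => Num.max (z i) 0].
Definition zneg n (z : zvec n) : zvec n := [ffun i => Num.max (- z i) 0].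

Definition norm1 n (z : zvec n) : int := \sum_(i < n) `|z i|.

Definition nonneg n (z : zvec n) : Prop := forall i, 0 <= z i.

Definition xmon (K : fieldType) n (u : zvec n) : {mpoly K[n]} :=
  @mpolyX n K [multinom absz (u i) | i < n].

Definition binom (K : fieldType) n (u : zvec n) : {mpoly K[n]} :=
  @xmon K n (zpos u) - @xmon K n (zneg u).

Definition toric_ideal (K : fieldType) n (a : 'I_n -> int) (p : {mpoly K[n]}) : Prop :=
  mmap (fun c : K => c%:P) (fun i => 'X^(absz (a i))) p = 0.

Definition in_binom_ideal (K : fieldType) n (B : zvec n -> Prop) (p : {mpoly K[n]}) : Prop :=
  exists s : seq ({mpoly K[n]} * zvec n),
    (forall x, x \in s -> B x.2) /\ p = \sum_(x <- s) x.1 * @binom K n x.2.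

Definition markov_basis (K : fieldType) n (a : 'I_n -> int) (B : zvec n -> Prop) : Prop :=
  (forall u, B u -> inker a u) /\
  (forall p, toric_ideal a p <-> @in_binom_ideal K n B p).

Definition minimal_markov_basis (K : fieldType) n (a : 'I_n -> int) (B : zvec n -> Prop) : Prop :=
  @markov_basis K n a B /\
  forall B' : zvec n -> Prop, (forall u, B' u -> B u) -> (exists u, B u /\ ~ B' u) ->
    ~ @markov_basis K n a B'.

Definition reduces_distance n (u z : zvec n) : Prop :=
  exists (p q : zvec n) (eps : int),
    ((p = zpos z /\ q = zneg z) \/ (p = zneg z /\ q = zpos z)) /\
    (eps = 1 \/ eps = -1) /\
    nonneg [ffun i => p i + eps * u i] /\
    norm1 [ffun i => p i + eps * u i - q i] < norm1 z.

Definition distance_reducing n (a : 'I_n -> int) (B : zvec n -> Prop) : Prop :=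
  forall z : zvec n, inker a z -> (exists i, z i != 0) -> exists2 u, B u & reduces_distance u z.

Definition in_NS n (a : 'I_n -> int) (k : nat) (x : int) : Prop :=
  exists c : 'I_n -> nat, x = \sum_(i < n | (i < k)%N) (c i)%:Z * a i.
Definition in_ZL n (a : 'I_n -> int) (k : nat) (x : int) : Prop :=
  exists c : 'I_n -> int, x = \sum_(i < n | (i < k)%N) c i * a i.

Definition gluing_first_kind n (a : 'I_n -> int) : Prop :=
  forall (k : nat) (Hk : (k < n)%N), (1 <= k)%N ->
    let ak1 := a (Ordinal Hk) in
    exists x : int,
      in_NS a k x /\ (exists m : nat, x = m%:Z * ak1) /\
      (forall y : int, (exists m : int, y = m * x) <->
                       (in_ZL a k y /\ exists m : int, y = m * ak1)).

Definition vec4 (x0 x1 x2 x3 : int) : zvec 4 :=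
  [ffun i : 'I_4 => nth 0 [:: x0; x1; x2; x3] i].

(* Main.v *)
Require Import Defs.
From HB Require Import structures.
From mathcomp Require Import all_boot all_order all_algebra.
From mathcomp Require Import mpoly.
From mathcomp Require Import zify ring.
From Stdlib Require Import ClassicalEpsilon.
Import Order.TTheory GRing.Theory Num.Theory.
Local Open Scope ring_scope.

Section Phi.
Local Set Implicit Arguments.
Variables (K : fieldType) (n : nat) (F : 'X_{1..n} -> K).

Definition Phi (p : {mpoly K[n]}) : K := \sum_(m <- msupp p) p@_m * F m.

Lemma PhiEw p r : uniq r -> {subset msupp p <= r} ->
  Phi p = \sum_(m <- r) p@_m * F m.
Proof.
move=> ur sub; rewrite /Phi [RHS](bigID (mem (msupp p)) predT) /=.
rewrite [X in _ + X]big1 ?addr0; last first.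
  by move=> m /memN_msupp_eq0 ->; rewrite mul0r.
rewrite -(big_filter r); apply: perm_big; apply: uniq_perm => //.
  by rewrite filter_uniq.
move=> m; rewrite mem_filter /=.
by case H: (m \in msupp p) => //=; rewrite sub.
Qed.

Lemma PhiD p q : Phi (p + q) = Phi p + Phi q.
Proof.
pose r := undup (msupp p ++ msupp q).
have ur : uniq r by rewrite undup_uniq.
rewrite (@PhiEw (p + q) r) // ?(@PhiEw p r) ?(@PhiEw q r) //.
- by rewrite -big_split; apply: eq_bigr => m _; rewrite mcoeffD mulrDl.
- by move=> m mq; rewrite mem_undup mem_cat mq orbT.
- by move=> m mp; rewrite mem_undup mem_cat mp.
- by move=> m /msuppD_le; rewrite mem_undup.
Qed.

Lemma Phi0 : Phi 0 = 0.
Proof. by rewrite /Phi msupp0 big_nil. Qed.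

Lemma PhiN p : Phi (- p) = - Phi p.
Proof. by apply/eqP; rewrite -subr_eq0 opprK -PhiD addNr Phi0. Qed.

Lemma PhiB p q : Phi (p - q) = Phi p - Phi q.
Proof. by rewrite PhiD PhiN. Qed.

Lemma Phi_sum (I : Type) (s : seq I) (G : I -> {mpoly K[n]}) :
  Phi (\sum_(i <- s) G i) = \sum_(i <- s) Phi (G i).
Proof.
elim: s => [|i s IH]; first by rewrite !big_nil Phi0.
by rewrite !big_cons PhiD IH.
Qed.

Lemma PhiX m : Phi 'X_[m] = F m.
Proof. by rewrite /Phi msuppX big_seq1 mcoeffX eqxx mul1r. Qed.

Lemma PhiMX p m0 : Phi (p * 'X_[m0]) = \sum_(m <- msupp p) p@_m * F (m0 + m)%MM.
Proof.
rewrite (@PhiEw _ [seq (m0 + m')%MM | m' <- msupp p]).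
- by rewrite big_map; apply: eq_bigr => m _; rewrite mcoeffMX.
- by rewrite map_inj_uniq // => m1 m2 /=; rewrite ![(m0 + _)%MM]addmC; apply: addIm.
- by move=> m; rewrite (perm_mem (msuppMX p m0)).
Qed.

End Phi.

Lemma mmap1_pow (K : fieldType) n (a : 'I_n -> int) (m : 'X_{1..n}) :
  mmap1 (fun i => ('X^(absz (a i)) : {poly K})) m = 'X^(\sum_(i < n) absz (a i) * m i)%N.
Proof.
rewrite /mmap1; under eq_bigr do rewrite -exprM.
by rewrite prodrXr.
Qed.

Lemma toric_binom (K : fieldType) n (a : 'I_n -> int) (z : zvec n) :
  (forall i, 0 < a i) -> inker a z -> toric_ideal a (@binom K n z).
Proof.
move=> apos hz; rewrite /toric_ideal /binom /xmon.
rewrite mmapB !mmapX !mmap1_pow; apply/eqP; rewrite subr_eq0; apply/eqP.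
congr ('X^ _); apply/eqP; rewrite -(eqr_nat int) !natr_sum; apply/eqP.
apply/eqP; rewrite -subr_eq0 -sumrB; apply/eqP; rewrite -[RHS]hz.
apply: eq_bigr => i _; rewrite !mnmE !natrM !ffunE.
have := apos i; move: (a i) (z i) => ai zi Hai.
rewrite !pmulrn; nia.
Qed.

Lemma posneg (x : int) : (absz (Num.max x 0))%:Z - (absz (Num.max (- x) 0))%:Z = x.
Proof. lia. Qed.

Lemma posneg2 (x : int) : - ((absz (Num.max (- x) 0))%:Z - Num.max x 0) = x.
Proof. lia. Qed.

Lemma posneg3 (x : int) : (absz (Num.max x 0))%:Z - Num.max x 0 = 0.
Proof. lia. Qed.

Lemma lattice_gen (K : fieldType) n (a : 'I_n -> int) (B L : zvec n -> Prop) :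
  (forall i, 0 < a i) -> @markov_basis K n a B ->
  (forall u, B u -> L u) -> L 0 -> (forall u v, L u -> L v -> L (u - v)) ->
  forall z, inker a z -> L z.
Proof.
move=> apos [Bker HM] BL L0 Lsub z hz.
have Lopp u : L u -> L (- u) by move=> Lu; rewrite -sub0r; apply: Lsub.
have Ladd u v : L u -> L v -> L (u + v).
  by move=> Lu Lv; rewrite -[v]opprK; apply: Lsub => //; apply: Lopp.
pose mvec (m : 'X_{1..n}) : zvec n := [ffun i => (m i)%:Z].
pose F (m : 'X_{1..n}) : K :=
  if excluded_middle_informative (L (mvec m - zpos z)) then 1 else 0.
have HF m m1 m2 : L (mvec m1 - mvec m2) -> F (m1 + m)%MM = F (m2 + m)%MM.
  move=> Hu; rewrite /F.
  have E : mvec (m1 + m)%MM - zpos z = (mvec (m2 + m)%MM - zpos z) + (mvec m1 - mvec m2).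
    by apply/ffunP => i; rewrite !ffunE !mnmDE; lia.
  case: excluded_middle_informative; case: excluded_middle_informative => // h2 h1.
  - by exfalso; apply: h2; move: h1; rewrite E => h1;
      have := Lsub _ _ h1 Hu; rewrite addrK.
  - by exfalso; apply: h1; rewrite E; apply: Ladd.
have mvecP (u : zvec n) :
    mvec [multinom absz (zpos u i) | i < n] - mvec [multinom absz (zneg u i) | i < n] = u.
  by apply/ffunP => i; rewrite !ffunE !mnmE /zpos /zneg !ffunE; apply: posneg.
have key := @toric_binom K n a z apos hz.
have [s [sB Hs]] := (HM _).1 key.
have : Phi (K:=K) (n:=n) F (@binom K n z) = 0.
  rewrite Hs Phi_sum big1_seq // => x xs.
  rewrite /binom /xmon mulrBr PhiB !PhiMX -sumrB big1 //= => m _.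
  by rewrite (@HF m _ [multinom absz (zneg x.2 i) | i < n]) ?subrr // mvecP; apply: BL; apply: sB.
rewrite /binom /xmon PhiB !PhiX /F.
case: excluded_middle_informative => h1; last first.
  exfalso; apply: h1; suff -> : mvec [multinom absz (zpos z i) | i < n] - zpos z = 0 by [].
  by apply/ffunP => i; rewrite !ffunE !mnmE /zpos /zneg !ffunE; apply: posneg3.
case: excluded_middle_informative => h2; last first.
  by move=> /= H; exfalso; move: H; rewrite subr0 => /eqP; rewrite oner_eq0.
move=> _; have := Lopp _ h2.
suff -> : - (mvec [multinom absz (zneg z i) | i < n] - zpos z) = z by [].
by apply/ffunP => i; rewrite !ffunE !mnmE /zpos /zneg !ffunE; apply: posneg2.
Qed.

Definition i0 : 'I_4 := @Ordinal 4 0 isT.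
Definition i1 : 'I_4 := @Ordinal 4 1 isT.
Definition i2 : 'I_4 := @Ordinal 4 2 isT.
Definition i3 : 'I_4 := @Ordinal 4 3 isT.

Lemma forall4 (P : 'I_4 -> Prop) : P i0 -> P i1 -> P i2 -> P i3 -> forall i, P i.
Proof.
move=> h0 h1 h2 h3 [[|[|[|[|k]]]] Hk] //.
- by have -> : Ordinal Hk = i0 by apply: val_inj.
- by have -> : Ordinal Hk = i1 by apply: val_inj.
- by have -> : Ordinal Hk = i2 by apply: val_inj.
- by have -> : Ordinal Hk = i3 by apply: val_inj.
Qed.

Lemma sum4 (f : 'I_4 -> int) : \sum_(i < 4) f i = f i0 + f i1 + f i2 + f i3.
Proof.
rewrite !big_ord_recl big_ord0 addr0 !addrA.
have E0 : ord0 = i0 by apply: val_inj.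
have E1 : lift ord0 ord0 = i1 :> 'I_4 by apply: val_inj.
have E2 : lift ord0 (lift ord0 ord0) = i2 :> 'I_4 by apply: val_inj.
have E3 : lift ord0 (lift ord0 (lift ord0 ord0)) = i3 :> 'I_4 by apply: val_inj.
by rewrite E3 E2 E1 E0.
Qed.

Lemma v40 x0 x1 x2 x3 : vec4 x0 x1 x2 x3 i0 = x0. Proof. by rewrite ffunE. Qed.
Lemma v41 x0 x1 x2 x3 : vec4 x0 x1 x2 x3 i1 = x1. Proof. by rewrite ffunE. Qed.
Lemma v42 x0 x1 x2 x3 : vec4 x0 x1 x2 x3 i2 = x2. Proof. by rewrite ffunE. Qed.
Lemma v43 x0 x1 x2 x3 : vec4 x0 x1 x2 x3 i3 = x3. Proof. by rewrite ffunE. Qed.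
Definition v4E := (v40, v41, v42, v43).

Lemma vec4_eta (z : zvec 4) : z = vec4 (z i0) (z i1) (z i2) (z i3).
Proof. by apply/ffunP; apply: forall4; rewrite /= ?v4E. Qed.

Lemma vec4B x0 x1 x2 x3 y0 y1 y2 y3 :
  vec4 x0 x1 x2 x3 - vec4 y0 y1 y2 y3 = vec4 (x0 - y0) (x1 - y1) (x2 - y2) (x3 - y3).
Proof. by apply/ffunP; apply: forall4; rewrite /= !ffunE. Qed.

Lemma vec4_inj x0 x1 x2 x3 y0 y1 y2 y3 :
  vec4 x0 x1 x2 x3 = vec4 y0 y1 y2 y3 -> [/\ x0 = y0, x1 = y1, x2 = y2 & x3 = y3].
Proof.
move=> E; split.
- by have := congr1 (fun f : zvec 4 => f i0) E; rewrite !v4E.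
- by have := congr1 (fun f : zvec 4 => f i1) E; rewrite !v4E.
- by have := congr1 (fun f : zvec 4 => f i2) E; rewrite !v4E.
- by have := congr1 (fun f : zvec 4 => f i3) E; rewrite !v4E.
Qed.

Definition RD (z0 z1 z2 z3 u0 u1 u2 u3 : int) : Prop :=
 exists2 e : int, (e = 1 \/ e = -1) &
 ((0 <= Num.max z0 0 + e * u0 /\ 0 <= Num.max z1 0 + e * u1 /\
   0 <= Num.max z2 0 + e * u2 /\ 0 <= Num.max z3 0 + e * u3 /\
   `|z0 + e * u0| + `|z1 + e * u1| + `|z2 + e * u2| + `|z3 + e * u3|
     < `|z0| + `|z1| + `|z2| + `|z3|) \/
  (0 <= Num.max (- z0) 0 + e * u0 /\ 0 <= Num.max (- z1) 0 + e * u1 /\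
   0 <= Num.max (- z2) 0 + e * u2 /\ 0 <= Num.max (- z3) 0 + e * u3 /\
   `|z0 - e * u0| + `|z1 - e * u1| + `|z2 - e * u2| + `|z3 - e * u3|
     < `|z0| + `|z1| + `|z2| + `|z3|)).

Lemma rdp (x t : int) : Num.max x 0 + t - Num.max (- x) 0 = x + t. Proof. lia. Qed.
Lemma rdn (x t : int) : Num.max (- x) 0 + t - Num.max x 0 = - (x - t). Proof. lia. Qed.

Lemma reducesE z0 z1 z2 z3 u0 u1 u2 u3 :
  reduces_distance (vec4 u0 u1 u2 u3) (vec4 z0 z1 z2 z3) <-> RD z0 z1 z2 z3 u0 u1 u2 u3.
Proof.
rewrite /reduces_distance /nonneg /norm1 /zpos /zneg; split.
- move=> [p [q [e [Hpq [He [Hnn Hlt]]]]]]; exists e => //.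
  move: Hlt; rewrite !sum4 !ffunE /=.
  have N0 := Hnn i0; have N1 := Hnn i1; have N2 := Hnn i2; have N3 := Hnn i3.
  move: N0 N1 N2 N3; rewrite !ffunE /=.
  case: Hpq => [[-> ->]|[-> ->]]; rewrite !ffunE /=.
  + by rewrite !rdp; move=> *; left.
  + by rewrite !rdn !normrN; move=> *; right.
- move=> [e He [[N0 [N1 [N2 [N3 Hlt]]]]|[N0 [N1 [N2 [N3 Hlt]]]]]].
  + exists [ffun i => Num.max (vec4 z0 z1 z2 z3 i) 0].
    exists [ffun i => Num.max (- vec4 z0 z1 z2 z3 i) 0]; exists e.
    split; first by left.
    split => //; split.
    * by apply: forall4; rewrite /= !ffunE /=.
    * by rewrite !sum4 !ffunE /= !rdp.
  + exists [ffun i => Num.max (- vec4 z0 z1 z2 z3 i) 0].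
    exists [ffun i => Num.max (vec4 z0 z1 z2 z3 i) 0]; exists e.
    split; first by right.
    split => //; split.
    * by apply: forall4; rewrite /= !ffunE /=.
    * by rewrite !sum4 !ffunE /= !rdn !normrN.
Qed.

Lemma nrm1 (x t : int) : `|- x - t| = `|x + t|. Proof. by rewrite -opprD normrN. Qed.
Lemma nrm2 (x t : int) : `|- x + t| = `|x - t|. Proof. by rewrite -normrN opprD opprK. Qed.

Lemma RD_sym z0 z1 z2 z3 u0 u1 u2 u3 :
  RD z0 z1 z2 z3 u0 u1 u2 u3 -> RD (- z0) (- z1) (- z2) (- z3) u0 u1 u2 u3.
Proof.
move=> [e He [[A0 [A1 [A2 [A3 A4]]]]|[A0 [A1 [A2 [A3 A4]]]]]]; exists e => //;
  [right|left]; rewrite ?opprK ?nrm1 ?nrm2 !normrN; by repeat split.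
Qed.

Ltac rdfin := rewrite ?mul1r ?mulN1r ?opprK ?oppr0 ?addr0 ?subr0; (repeat split); lia.

Lemma core_pos (b1 b2 c1 c2 c3 d1 d2 d3 d4 x y w z0 z1 z2 z3 : int) :
  0 < b2 -> b2 < b1 -> 0 <= c1 -> 0 <= c2 -> 0 < c3 ->
  0 <= d1 -> 0 <= d2 -> 0 <= d3 -> 0 < d4 ->
  c1 < c2 + c3 -> (c1 = 0 /\ c3 < c2) \/ d1 + d3 < d2 + d4 ->
  c1 + c2 < c3 \/ d1 + d2 < d3 + d4 ->
  z0 = x * b1 + y * c1 + w * d1 -> z1 = - (x * b2) + y * c2 + w * d2 ->
  z2 = - (y * c3) + w * d3 -> z3 = - (w * d4) ->
  ~ (z0 = 0 /\ z1 = 0 /\ z2 = 0 /\ z3 = 0) ->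
  0 <= w -> (w = 0 -> 0 <= y) ->
  RD z0 z1 z2 z3 b1 (- b2) 0 0 \/ RD z0 z1 z2 z3 c1 c2 (- c3) 0 \/
  RD z0 z1 z2 z3 d1 d2 d3 (- d4).
Proof.
move=> hb2 hb1 hc1 hc2 hc3 hd1 hd2 hd3 hd4 Ha Hb Hc E0 E1 E2 E3 Hnz Hw Hy.
have [Hz0|Hz0] := lerP b1 z0.
  left; exists (-1); first by right.
  by left; clear E0 E1 E2 E3 Hnz; rdfin.
have [Hz0'|Hz0'] := lerP z0 (- b1).
  left; exists (-1); first by right.
  by right; clear E0 E1 E2 E3 Hnz; rdfin.
have [Hw0|Hw0] := eqVneq w 0.
  subst w; have {Hy} Hy := Hy erefl.
  have [Hy0|Hy0] := eqVneq y 0.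
    subst y; exfalso; apply: Hnz.
    have Hx : x = 0 by nia.
    by subst x; rewrite E0 E1 E2 E3; lia.
  have Hx : x <= 0 by nia.
  have F1 : c2 <= z1 by nia.
  have F2 : z2 <= - c3 by nia.
  have F3 : z3 = 0 by lia.
  right; left; exists 1; first by left.
  by right; clear E0 E1 E2 E3 Hnz; rdfin.
have {Hw Hw0} Hw : 1 <= w by lia.
have F3 : z3 <= - d4 by nia.
have [Hyn|Hyp] := ltrP y 0.
  have F2 : c3 + d3 <= z2 by nia.
  case: Hc => Hc.
    right; left; exists 1; first by left.
    by left; clear E0 E1 E2 E3 Hnz; rdfin.
  right; right; exists 1; first by left.
  by right; clear E0 E1 E2 E3 Hnz; rdfin.
have Hx : x <= 0 by nia.
have [Hy0|Hy0] := eqVneq y 0.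
  subst y.
  have F1 : d2 <= z1 by nia.
  have F2 : d3 <= z2 by nia.
  right; right; exists 1; first by left.
  by right; clear E0 E1 E2 E3 Hnz; rdfin.
have F1 : c2 + d2 <= z1 by nia.
case: Hb => Hb.
  right; left; exists (-1); first by right.
  by left; clear E0 E1 E2 E3 Hnz; rdfin.
right; right; exists 1; first by left.
by right; clear E0 E1 E2 E3 Hnz; rdfin.
Qed.

Lemma core (b1 b2 c1 c2 c3 d1 d2 d3 d4 x y w z0 z1 z2 z3 : int) :
  0 < b2 -> b2 < b1 -> 0 <= c1 -> 0 <= c2 -> 0 < c3 ->
  0 <= d1 -> 0 <= d2 -> 0 <= d3 -> 0 < d4 ->
  c1 < c2 + c3 -> (c1 = 0 /\ c3 < c2) \/ d1 + d3 < d2 + d4 ->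
  c1 + c2 < c3 \/ d1 + d2 < d3 + d4 ->
  z0 = x * b1 + y * c1 + w * d1 -> z1 = - (x * b2) + y * c2 + w * d2 ->
  z2 = - (y * c3) + w * d3 -> z3 = - (w * d4) ->
  ~ (z0 = 0 /\ z1 = 0 /\ z2 = 0 /\ z3 = 0) ->
  RD z0 z1 z2 z3 b1 (- b2) 0 0 \/ RD z0 z1 z2 z3 c1 c2 (- c3) 0 \/
  RD z0 z1 z2 z3 d1 d2 d3 (- d4).
Proof.
move=> hb2 hb1 hc1 hc2 hc3 hd1 hd2 hd3 hd4 Ha Hb Hc E0 E1 E2 E3 Hnz.
have [Hs|Hs] : (0 <= w /\ (w = 0 -> 0 <= y)) \/ (0 <= - w /\ (- w = 0 -> 0 <= - y)).
- have [Hw|Hw] := ltrP w 0; first by right; split; lia.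
  have [Hw0|Hw0] := eqVneq w 0; last by left; split; lia.
  have [Hy|Hy] := ltrP y 0; [right|left]; split; lia.
- by case: Hs => Hw Hy; apply: (@core_pos b1 b2 c1 c2 c3 d1 d2 d3 d4 x y w).
- case: Hs => Hw Hy.
  have [H|[H|H]] : RD (- z0) (- z1) (- z2) (- z3) b1 (- b2) 0 0 \/
      RD (- z0) (- z1) (- z2) (- z3) c1 c2 (- c3) 0 \/
      RD (- z0) (- z1) (- z2) (- z3) d1 d2 d3 (- d4).
    apply: (@core_pos b1 b2 c1 c2 c3 d1 d2 d3 d4 (- x) (- y) (- w)) => //;
      try (rewrite ?E0 ?E1 ?E2 ?E3; ring); lia.
  + by left; move: H => /RD_sym; rewrite !opprK.
  + by right; left; move: H => /RD_sym; rewrite !opprK.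
  + by right; right; move: H => /RD_sym; rewrite !opprK.
Qed.

Ltac rdfalse := case=> e [->|->] [[A0 [A1 [A2 [A3 A4]]]]|[A0 [A1 [A2 [A3 A4]]]]];
  lia.

Lemma witC (b1 b2 c1 c2 c3 d1 d2 d3 d4 P Q : int) :
  0 < b2 -> b2 < b1 -> 0 <= c1 -> 0 <= c2 -> 0 < c3 ->
  0 <= d1 -> 0 <= d2 -> 0 <= d3 -> 0 < d4 -> 0 < c1 + c2 -> 0 < d1 + d2 + d3 ->
  c3 <= c1 + c2 -> d3 + d4 <= d1 + d2 -> 0 <= P -> 0 <= Q ->
  [/\ ~ RD 0 0 P (- Q) b1 (- b2) 0 0, ~ RD 0 0 P (- Q) c1 c2 (- c3) 0 &
      ~ RD 0 0 P (- Q) d1 d2 d3 (- d4)].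
Proof. by move=> hb2 hb1 hc1 hc2 hc3 hd1 hd2 hd3 hd4 hc12 hd123 h1 h2 hP hQ; split; rdfalse. Qed.

Lemma witB (b1 b2 c1 c2 c3 d1 d2 d3 d4 P Q : int) :
  0 < b2 -> b2 < b1 -> 0 <= c1 -> 0 <= c2 -> 0 < c3 ->
  0 <= d1 -> 0 <= d2 -> 0 <= d3 -> 0 < d4 -> 0 < c1 + c2 -> 0 < d1 + d2 + d3 ->
  ~ (c1 = 0 /\ c3 < c2) -> d2 + d4 <= d1 + d3 -> 0 <= P -> 0 <= Q ->
  [/\ ~ RD 0 P 0 (- Q) b1 (- b2) 0 0, ~ RD 0 P 0 (- Q) c1 c2 (- c3) 0 &
      ~ RD 0 P 0 (- Q) d1 d2 d3 (- d4)].
Proof. by move=> hb2 hb1 hc1 hc2 hc3 hd1 hd2 hd3 hd4 hc12 hd123 h1 h2 hP hQ; split; rdfalse. Qed.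

Lemma witA (b1 b2 c1 c2 c3 d1 d2 d3 d4 P Q : int) :
  0 < b2 -> b2 < b1 -> 0 <= c1 -> 0 <= c2 -> 0 < c3 ->
  0 <= d1 -> 0 <= d2 -> 0 <= d3 -> 0 < d4 -> 0 < c1 + c2 -> 0 < d1 + d2 + d3 ->
  c2 + c3 <= c1 -> (c1 = 0 /\ c3 < c2) \/ d1 + d3 < d2 + d4 ->
  c1 + c2 < c3 \/ d1 + d2 < d3 + d4 -> 0 <= P -> 0 <= Q ->
  [/\ ~ RD 0 P (- Q) 0 b1 (- b2) 0 0, ~ RD 0 P (- Q) 0 c1 c2 (- c3) 0 &
      ~ RD 0 P (- Q) 0 d1 d2 d3 (- d4)].
Proof. by move=> hb2 hb1 hc1 hc2 hc3 hd1 hd2 hd3 hd4 hc12 hd123 h1 h2 h3 hP hQ; split; rdfalse. Qed.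

Lemma comb_ker (a0 a1 a2 a3 b1 b2 c1 c2 c3 d1 d2 d3 d4 x y w : int) :
  a0 * b1 - a1 * b2 = 0 -> a0 * c1 + a1 * c2 - a2 * c3 = 0 ->
  a0 * d1 + a1 * d2 + a2 * d3 - a3 * d4 = 0 ->
  a0 * (x * b1 + y * c1 + w * d1) + a1 * (- (x * b2) + y * c2 + w * d2) +
  a2 * (- (y * c3) + w * d3) + a3 * (- (w * d4)) = 0.
Proof.
move=> h1 h2 h3.
have -> : a0 * (x * b1 + y * c1 + w * d1) + a1 * (- (x * b2) + y * c2 + w * d2) +
  a2 * (- (y * c3) + w * d3) + a3 * (- (w * d4)) =
  x * (a0 * b1 - a1 * b2) + y * (a0 * c1 + a1 * c2 - a2 * c3) +
  w * (a0 * d1 + a1 * d2 + a2 * d3 - a3 * d4) by ring.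
by rewrite h1 h2 h3; ring.
Qed.

Lemma inker4 (a : 'I_4 -> int) z0 z1 z2 z3 :
  inker a (vec4 z0 z1 z2 z3) <-> a i0 * z0 + a i1 * z1 + a i2 * z2 + a i3 * z3 = 0.
Proof. by rewrite /inker sum4 !ffunE /=. Qed.

Lemma exists4 (P : 'I_4 -> Prop) : (exists i, P i) -> P i0 \/ P i1 \/ P i2 \/ P i3.
Proof.
move=> [[[|[|[|[|k]]]] Hk] H] //.
- by left; have <- : Ordinal Hk = i0 by apply: val_inj.
- by right; left; have <- : Ordinal Hk = i1 by apply: val_inj.
- by right; right; left; have <- : Ordinal Hk = i2 by apply: val_inj.
- by right; right; right; have <- : Ordinal Hk = i3 by apply: val_inj.
Qed.

Theorem corollary6p2 (K : fieldType) (a : 'I_4 -> int)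
  (b1 b2 c1 c2 c3 d1 d2 d3 d4 : nat) :
  (forall i, 0 < a i) ->
  gluing_first_kind a ->
  (0 < b1)%N -> (0 < b2)%N -> (0 < c3)%N -> (0 < d4)%N ->
  @minimal_markov_basis K 4 a
    (fun v => v = vec4 b1%:Z (- b2%:Z) 0 0 \/
              v = vec4 c1%:Z c2%:Z (- c3%:Z) 0 \/
              v = vec4 d1%:Z d2%:Z d3%:Z (- d4%:Z)) ->
  (b2 < b1)%N ->
  (distance_reducing a
    (fun v => v = vec4 b1%:Z (- b2%:Z) 0 0 \/
              v = vec4 c1%:Z c2%:Z (- c3%:Z) 0 \/
              v = vec4 d1%:Z d2%:Z d3%:Z (- d4%:Z))
   <->
   [/\ (c1 < c2 + c3)%N,
       ((c1 = 0%N /\ (c3 < c2)%N) \/ (d1 + d3 < d2 + d4)%N)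
     & ((c1 + c2 < c3)%N \/ (d1 + d2 < d3 + d4)%N)]).
Proof.
move=> apos _ hb1 hb2 hc3 hd4 [HMB _] hb12.
have [Bker HM] := HMB.
have Eb := Bker _ (or_introl erefl).
have Ec := Bker _ (or_intror (or_introl erefl)).
have Ed := Bker _ (or_intror (or_intror erefl)).
move: Eb Ec Ed; rewrite !inker4 => Eb Ec Ed.
have a0p := apos i0; have a1p := apos i1; have a2p := apos i2; have a3p := apos i3.
have Eb' : a i0 * b1%:Z - a i1 * b2%:Z = 0 by lia.
have Ec' : a i0 * c1%:Z + a i1 * c2%:Z - a i2 * c3%:Z = 0 by lia.
have Ed' : a i0 * d1%:Z + a i1 * d2%:Z + a i2 * d3%:Z - a i3 * d4%:Z = 0 by lia.
have hc12 : (0 < c1 + c2)%N.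
  case: (posnP (c1 + c2)) => // h; exfalso.
  have h1 : c1 = 0%N by lia.
  have h2 : c2 = 0%N by lia.
  move: Ec'; rewrite h1 h2; nia.
have hd123 : (0 < d1 + d2 + d3)%N.
  case: (posnP (d1 + d2 + d3)) => // h; exfalso.
  have h1 : d1 = 0%N by lia.
  have h2 : d2 = 0%N by lia.
  have h3 : d3 = 0%N by lia.
  move: Ed'; rewrite h1 h2 h3; nia.
split.
- move=> DR.
  have HC : (c1 + c2 < c3)%N \/ (d1 + d2 < d3 + d4)%N.
    case: (boolP ((c1 + c2 < c3) || (d1 + d2 < d3 + d4))%N) => [/orP //|/norP [n1 n2]].
    exfalso.
    pose D : int := c1%:Z * b2%:Z + c2%:Z * b1%:Z.
    pose x : int := c1%:Z * d2%:Z - d1%:Z * c2%:Z.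
    pose y : int := - (d1%:Z * b2%:Z + d2%:Z * b1%:Z).
    pose w : int := D.
    have Hk := @comb_ker (a i0) (a i1) (a i2) (a i3) b1 b2 c1 c2 c3 d1 d2 d3 d4 x y w Eb' Ec' Ed'.
    have E0 : x * b1%:Z + y * c1%:Z + w * d1%:Z = 0 by rewrite /x /y /w /D; ring.
    have E1 : - (x * b2%:Z) + y * c2%:Z + w * d2%:Z = 0 by rewrite /x /y /w /D; ring.
    rewrite E0 E1 in Hk.
    have Dpos : 0 < D by rewrite /D; nia.
    have Ppos : 0 <= - (y * c3%:Z) + w * d3%:Z by rewrite /y /w; nia.
    have Qpos : 0 < w * d4%:Z by rewrite /w; nia.
    set P := - (y * c3%:Z) + w * d3%:Z in Hk Ppos.
    set Q := w * d4%:Z in Hk Qpos.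
    have NZ : exists i, vec4 0 0 P (- Q) i != 0 by exists i3; rewrite ffunE /=; lia.
    have [u Bu] := DR _ (iffRL (inker4 _ _ _ _ _) Hk) NZ.
    have [W1 W2 W3] := @witC b1 b2 c1 c2 c3 d1 d2 d3 d4 P Q
      ltac:(lia) ltac:(lia) ltac:(lia) ltac:(lia) ltac:(lia) ltac:(lia) ltac:(lia)
      ltac:(lia) ltac:(lia) ltac:(lia) ltac:(lia) ltac:(lia) ltac:(lia) ltac:(lia) ltac:(lia).
    by case: Bu => [->|[->|->]]; rewrite reducesE.
  have HB : (c1 = 0%N /\ (c3 < c2)%N) \/ (d1 + d3 < d2 + d4)%N.
    case: (boolP (((c1 == 0) && (c3 < c2)) || (d1 + d3 < d2 + d4))%N).
      by case/orP => [/andP [/eqP h1 h2]|h]; [left|right].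
    move=> /norP [n1 n2]; exfalso.
    pose x : int := - (c3%:Z * d1%:Z + d3%:Z * c1%:Z).
    pose y : int := b1%:Z * d3%:Z.
    pose w : int := b1%:Z * c3%:Z.
    have Hk := @comb_ker (a i0) (a i1) (a i2) (a i3) b1 b2 c1 c2 c3 d1 d2 d3 d4 x y w Eb' Ec' Ed'.
    have E0 : x * b1%:Z + y * c1%:Z + w * d1%:Z = 0 by rewrite /x /y /w; ring.
    have E2 : - (y * c3%:Z) + w * d3%:Z = 0 by rewrite /x /y /w; ring.
    rewrite E0 E2 in Hk.
    have Ppos : 0 <= - (x * b2%:Z) + y * c2%:Z + w * d2%:Z by rewrite /x /y /w; nia.
    have Qpos : 0 < w * d4%:Z by rewrite /w; nia.
    set P := - (x * b2%:Z) + y * c2%:Z + w * d2%:Z in Hk Ppos.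
    set Q := w * d4%:Z in Hk Qpos.
    have NZ : exists i, vec4 0 P 0 (- Q) i != 0 by exists i3; rewrite ffunE /=; lia.
    have [u Bu] := DR _ (iffRL (inker4 _ _ _ _ _) Hk) NZ.
    have nb : ~ (c1%:Z = 0 /\ c3%:Z < c2%:Z).
      by move=> [h1 h2]; move/negP: n1; apply; apply/andP; split; [apply/eqP|]; lia.
    have [W1 W2 W3] := @witB b1 b2 c1 c2 c3 d1 d2 d3 d4 P Q
      ltac:(lia) ltac:(lia) ltac:(lia) ltac:(lia) ltac:(lia) ltac:(lia) ltac:(lia)
      ltac:(lia) ltac:(lia) ltac:(lia) ltac:(lia) nb ltac:(lia) ltac:(lia) ltac:(lia).
    by case: Bu => [->|[->|->]]; rewrite reducesE.
  split => //.
  case: (ltnP c1 (c2 + c3)) => // n1; exfalso.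
  pose x : int := - c1%:Z.
  pose y : int := b1%:Z.
  pose w : int := 0.
  have Hk := @comb_ker (a i0) (a i1) (a i2) (a i3) b1 b2 c1 c2 c3 d1 d2 d3 d4 x y w Eb' Ec' Ed'.
  have E0 : x * b1%:Z + y * c1%:Z + w * d1%:Z = 0 by rewrite /x /y /w; ring.
  have E3 : - (w * d4%:Z) = 0 by rewrite /w; ring.
  have E2 : - (y * c3%:Z) + w * d3%:Z = - (b1%:Z * c3%:Z) by rewrite /y /w; ring.
  rewrite E0 E2 E3 in Hk.
  have Ppos : 0 <= - (x * b2%:Z) + y * c2%:Z + w * d2%:Z by rewrite /x /y /w; nia.
  have Qpos : 0 < b1%:Z * c3%:Z by nia.
  set P := - (x * b2%:Z) + y * c2%:Z + w * d2%:Z in Hk Ppos.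
  set Q := b1%:Z * c3%:Z in Hk Qpos.
  have NZ : exists i, vec4 0 P (- Q) 0 i != 0 by exists i2; rewrite ffunE /=; lia.
  have [u Bu] := DR _ (iffRL (inker4 _ _ _ _ _) Hk) NZ.
  have HB' : (c1%:Z = 0 /\ c3%:Z < c2%:Z) \/ d1%:Z + d3%:Z < d2%:Z + d4%:Z.
    by case: HB => [[h1 h2]|h]; [left; split|right]; lia.
  have HC' : c1%:Z + c2%:Z < c3%:Z \/ d1%:Z + d2%:Z < d3%:Z + d4%:Z.
    by case: HC => h; [left|right]; lia.
  have [W1 W2 W3] := @witA b1 b2 c1 c2 c3 d1 d2 d3 d4 P Q
    ltac:(lia) ltac:(lia) ltac:(lia) ltac:(lia) ltac:(lia) ltac:(lia) ltac:(lia)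
    ltac:(lia) ltac:(lia) ltac:(lia) ltac:(lia) ltac:(lia) HB' HC' ltac:(lia) ltac:(lia).
  by case: Bu => [->|[->|->]]; rewrite reducesE.
- move=> [Ha Hb Hc] z Hz Hnz.
  pose L (v : zvec 4) := exists x y w : int,
    v = vec4 (x * b1%:Z + y * c1%:Z + w * d1%:Z) (- (x * b2%:Z) + y * c2%:Z + w * d2%:Z)
             (- (y * c3%:Z) + w * d3%:Z) (- (w * d4%:Z)).
  have [x [y [w Ez]]] : L z.
    apply: (@lattice_gen K 4 a _ L apos HMB _ _ _ z Hz).
    - move=> u [->|[->|->]]; [exists 1, 0, 0|exists 0, 1, 0|exists 0, 0, 1];
        congr vec4; ring.
    - exists 0, 0, 0; apply/ffunP; apply: forall4; rewrite /= !ffunE /=; ring.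
    - move=> u v [x [y [w ->]]] [x' [y' [w' ->]]].
      exists (x - x'), (y - y'), (w - w'); rewrite vec4B; congr vec4; ring.
  subst z.
  have NZ : ~ ((x * b1%:Z + y * c1%:Z + w * d1%:Z) = 0 /\ (- (x * b2%:Z) + y * c2%:Z + w * d2%:Z) = 0 /\
             (- (y * c3%:Z) + w * d3%:Z) = 0 /\ (- (w * d4%:Z)) = 0).
    move=> [h0 [h1 [h2 h3]]].
    by case: (@exists4 _ Hnz) => [|[|[|]]]; rewrite ffunE /= ?h0 ?h1 ?h2 ?h3 eqxx.
  have Hb' : (c1%:Z = 0 /\ c3%:Z < c2%:Z) \/ d1%:Z + d3%:Z < d2%:Z + d4%:Z.
    by case: Hb => [[h1 h2]|h]; [left; split|right]; lia.
  have Hc' : c1%:Z + c2%:Z < c3%:Z \/ d1%:Z + d2%:Z < d3%:Z + d4%:Z.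
    by case: Hc => h; [left|right]; lia.
  have := @core b1 b2 c1 c2 c3 d1 d2 d3 d4 x y w _ _ _ _
    ltac:(lia) ltac:(lia) ltac:(lia) ltac:(lia) ltac:(lia) ltac:(lia) ltac:(lia)
    ltac:(lia) ltac:(lia) ltac:(lia) Hb' Hc' erefl erefl erefl erefl NZ.
  case=> [H|[H|H]].
  + by exists (vec4 b1%:Z (- b2%:Z) 0 0); [left | rewrite reducesE].
  + by exists (vec4 c1%:Z c2%:Z (- c3%:Z) 0); [right; left | rewrite reducesE].
  + by exists (vec4 d1%:Z d2%:Z d3%:Z (- d4%:Z)); [right; right | rewrite reducesE].
Qed.
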